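(* Let $R:\ \mu=\rho^{(0)}\to\dots\to\rho^{(l)}=\nu$ be a sequence of diagrams and let $T\in\mathcal{T}(\lambda,R)$. If $$\prod_{\substack{\alpha\in\lambda\\ T(\alpha)\text{ unbarred}}}\Big(a_{T(\alpha)-\rho(\alpha)_{T(\alpha)}}-a_{T(\alpha)-c(\alpha)}\Big)\neq 0,$$ then $T$ is $\nu$-bounded.
   Context: $a=(a_i)_{i\in\mathbb{Z}}$ are independent variables. Partitions are identified with Young diagrams; box $(i,j)$ is in row $i$, column $j$; content $c(\alpha)=j-i$; $\nu'_j$ is the length of column $j$ of $\nu$. A reverse $\lambda$-tableau is a filling $T$ of $\lambda$ by positive integers weakly decreasing along rows and strictly decreasing down columns. $\rho\to\sigma$ means $\sigma$ is obtained from $\rho$ by adding one box; for $R:\ \mu=\rho^{(0)}\to\dots\to\rho^{(l)}=\nu$, $r_i$ is the row of the box added to $\rho^{(i-1)}$. Column order: columns left to right, within a column bottom to top; $\prec$ is strict precedence. $\mathcal{T}(\lambda,R)$ consists of reverse $\lambda$-tableaux $T$ with chosen boxes $\alpha_1\prec\dots\prec\alpha_l$ such that $T(\alpha_i)=r_i$; those entries are barred, the rest unbarred. For $\alpha$ with $\alpha_i\prec\alpha\prec\alpha_{i+1}$ ($0\le i\le l$, conditions with $\alpha_0,\alpha_{l+1}$ void), $\rho(\alpha)=\rho^{(i)}$, and $\rho(\alpha)_k$ is the length of row $k$ of $\rho(\alpha)$. $T$ is $\nu$-bounded if $T(1,j)\le\nu'_j$ for all $j=1,\dots,\lambda_1$.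 *)

(* Defs.v *)
From HB Require Import structures.
From mathcomp Require Import all_boot all_order all_algebra.
Set Implicit Arguments. Unset Strict Implicit. Unset Printing Implicit Defensive.
Import Order.TTheory GRing.Theory Num.Theory.

(* A box (i, j): row i, column j, both 1-indexed. *)
Definition box := (nat * nat)%type.

Definition is_partition (s : seq nat) : bool :=
  sorted geq s && all (fun x => 0 < x) s.

(* length of row k (1-indexed) of the diagram rho; 0 beyond the last row *)
Definition row_len (rho : seq nat) (k : nat) : nat := nth 0 rho k.-1.

Definition in_diag (lam : seq nat) (b : box) : bool :=
  (0 < b.1 <= size lam) && (0 < b.2 <= row_len lam b.1).

Definition boxes (lam : seq nat) : seq box :=
  [seq (i, j) | i <- iota 1 (size lam), j <- iota 1 (row_len lam i)].

Definition content (b : box) : int := (b.2%:Z - b.1%:Z)%R.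

Definition col_len (nu : seq nat) (j : nat) : nat := count (fun r => j <= r) nu.

Definition reverse_tableau (lam : seq nat) (T : box -> nat) : Prop :=
  forall b, in_diag lam b ->
    [/\ 0 < T b,
        in_diag lam (b.1, b.2.+1) -> T (b.1, b.2.+1) <= T b
      & in_diag lam (b.1.+1, b.2) -> T (b.1.+1, b.2) < T b].

Definition col_prec (a b : box) : bool :=
  (a.2 < b.2) || ((a.2 == b.2) && (b.1 < a.1)).

(* R : rho^(0) -> ... -> rho^(l), given as the list of its diagrams
   (size l+1), each a partition, each obtained from the previous by adding one box *)
Definition diag_seq (rhos : seq (seq nat)) : Prop :=
  [/\ 0 < size rhos,
      forall i, i < size rhos -> is_partition (nth [::] rhos i)
    & forall i, i.+1 < size rhos ->
        exists k, nth [::] rhos i.+1 = incr_nth (nth [::] rhos i) k].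

(* the (1-indexed) row of the box added to rho to get sigma *)
Definition added_row (rho sigma : seq nat) : nat :=
  (find (fun k => nth 0 rho k != nth 0 sigma k) (iota 0 (size sigma))).+1.

Definition rrow (rhos : seq (seq nat)) (i : nat) : nat :=
  added_row (nth [::] rhos i.-1) (nth [::] rhos i).

(* (T, alphas) in T(lam, R): T a reverse lam-tableau, alphas = [alpha_1;...;alpha_l]
   boxes of lam with alpha_1 < ... < alpha_l in column order, T(alpha_i) = r_i *)
Definition in_TR (lam : seq nat) (rhos : seq (seq nat)) (T : box -> nat)
    (alphas : seq box) : Prop :=
  [/\ reverse_tableau lam T,
      size alphas = (size rhos).-1,
      all (in_diag lam) alphas,
      sorted col_prec alphas
    & forall i, 0 < i <= size alphas -> T (nth (0, 0) alphas i.-1) = rrow rhos i].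

(* rho(alpha) = rho^(i) where alpha_i < alpha < alpha_{i+1} *)
Definition rho_of (rhos : seq (seq nat)) (alphas : seq box) (b : box) : seq nat :=
  nth [::] rhos (count (fun a => col_prec a b) alphas).

Definition wfactor (R : comNzRingType) (a : int -> R) (rhos : seq (seq nat))
    (alphas : seq box) (T : box -> nat) (b : box) : R :=
  (a ((T b)%:Z - (row_len (rho_of rhos alphas b) (T b))%:Z)%R
   - a ((T b)%:Z - content b)%R)%R.

Definition nu_bounded (lam nu : seq nat) (T : box -> nat) : Prop :=
  forall j, 0 < j <= row_len lam 1 -> T (1, j) <= col_len nu j.

(* Main.v *)
Require Import Defs.
From HB Require Import structures.
From mathcomp Require Import all_boot all_order all_algebra.
Import GRing.Theory.

Lemma col_prec_irr x : col_prec x x = false.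
Proof. by rewrite /col_prec ltnn eqxx ltnn. Qed.

Lemma col_prec_trans : transitive col_prec.
Proof.
move=> y x z; rewrite /col_prec.
case/orP=> [h1|/andP[/eqP e1 h1]]; case/orP=> [h2|/andP[/eqP e2 h2]].
- by rewrite (ltn_trans h1 h2).
- by rewrite -e2 h1.
- by rewrite e1 h2.
- by rewrite e1 e2 eqxx (ltn_trans h2 h1) orbT.
Qed.

Lemma count_pw (T : Type) (p q r : pred T) s :
  (forall z, p z + q z <= r z) -> count p s + count q s <= count r s.
Proof.
move=> H; elim: s => //= z s IH.
rewrite addnACA; apply: leq_add => //.
Qed.

Lemma count_sorted s m : sorted col_prec s -> m < size s ->
  count (col_prec ^~ (nth (0,0) s m)) s = m.
Proof.
elim: s m => // x s IH m /= Hp Hm.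
have Hall := order_path_min col_prec_trans Hp.
have Hs := path_sorted Hp.
case: m Hm => [|m] Hm /=.
- rewrite col_prec_irr add0n; apply/eqP; rewrite -leqn0 leqNgt -has_count.
  apply/hasP=> -[y Hy Hyx].
  by move/allP: Hall => /(_ y Hy) Hxy; have := col_prec_trans _ _ _ Hyx Hxy; rewrite col_prec_irr.
- have Hx : col_prec x (nth (0,0) s m) by move/allP: Hall; apply; apply: mem_nth.
  by rewrite Hx IH.
Qed.

Lemma mem_count (T : eqType) (x : T) s : (x \in s) <= count (pred1 x) s.
Proof. by case H: (x \in s) => //; move: H; rewrite -has_pred1 has_count. Qed.

Lemma count_mono s x y : col_prec x y ->
  count (col_prec ^~ x) s + (x \in s) <= count (col_prec ^~ y) s.
Proof.
move=> Hxy; apply: (@leq_trans (count (col_prec^~x) s + count (pred1 x) s)); first by rewrite leq_add2l mem_count.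
apply: count_pw => z /=.
case: eqP => [->|_]; first by rewrite col_prec_irr Hxy.
by case H: (col_prec z x) => //=; rewrite (col_prec_trans _ _ _ H Hxy).
Qed.

Lemma count_le_size s x : count (col_prec ^~ x) s + (x \in s) <= size s.
Proof.
apply: (@leq_trans (count (col_prec^~x) s + count (pred1 x) s)); first by rewrite leq_add2l mem_count.
rewrite -(count_predT s); apply: count_pw => z /=.
by case: eqP => [->|_]; rewrite ?col_prec_irr //= addn0; case: col_prec.
Qed.

Lemma rhos_mono rhos m n t : diag_seq rhos -> m <= n -> n < size rhos ->
  row_len (nth [::] rhos m) t <= row_len (nth [::] rhos n) t.
Proof.
move=> [_ _ Hinc]; elim: n => [|n IH] Hmn Hn.
  by rewrite leqn0 in Hmn; rewrite (eqP Hmn).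
rewrite leq_eqVlt in Hmn; case/orP: Hmn => [/eqP->//|Hmn].
apply: leq_trans (IH Hmn (ltnW Hn)) _.
have [k ->] := Hinc n Hn.
by rewrite /row_len nth_incr_nth leq_addl.
Qed.

Lemma sorted_nth_mono s i i' : sorted geq s -> i <= i' -> nth 0 s i' <= nth 0 s i.
Proof.
elim: s i i' => [|x s IH] i i' /=; first by rewrite !nth_nil.
move=> Hp.
have Hall := order_path_min (fun a b c h1 h2 => leq_trans h2 h1) Hp.
have Hs := path_sorted Hp.
case: i => [|i]; case: i' => [|i'] //=.
- move=> _; case: (ltnP i' (size s)) => Hi; last by rewrite nth_default.
  by move/allP: Hall => /(_ _ (mem_nth 0 Hi)).
- by rewrite ltnS; apply: IH.
Qed.

Lemma part_mono s t t' : is_partition s -> t <= t' ->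
  row_len s t' <= row_len s t.
Proof.
case/andP=> Hs _ Ht; apply: sorted_nth_mono => //.
by rewrite -!subn1 leq_sub2r.
Qed.

Lemma added_row_incr rho p : added_row rho (incr_nth rho p) = p.+1.
Proof.
rewrite /added_row; congr S.
set n := size _.
have Hp : p < n by rewrite /n size_incr_nth; case: ifP.
rewrite (@eq_find _ _ (pred1 p)); last first.
  by move=> k /=; rewrite nth_incr_nth (eq_sym k p); case: (p == k);
     rewrite ?add1n ?add0n ?eqxx // (ltn_eqF (ltnSn _)).
have -> : find (pred1 p) (iota 0 n) = index p (iota 0 n) by [].
have {1}-> : p = nth 0 (iota 0 n) p by rewrite nth_iota.
by rewrite index_uniq ?size_iota ?iota_uniq.
Qed.

Lemma col_len_ge nu t j : sorted geq nu -> 0 < t -> 0 < j <= row_len nu t ->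
  t <= col_len nu j.
Proof.
rewrite /row_len /col_len.
elim: nu t => [|x s IH] t Hp Ht /andP[Hj Hjr].
  by move: (leq_trans Hj Hjr); rewrite nth_nil.
have Hall := order_path_min (fun a b c h1 h2 => leq_trans h2 h1) Hp.
have Hs := path_sorted Hp.
case: t Ht Hjr => [//|[|t]] _ /= Hjr.
- by rewrite Hjr.
- have Hi : t < size s.
    by rewrite ltnNge; apply/negP => H; rewrite nth_default // leqn0 in Hjr;
       rewrite (eqP Hjr) in Hj.
  have Hx : j <= x by apply: leq_trans Hjr _; move/allP: Hall => /(_ _ (mem_nth 0 Hi)).
  rewrite Hx add1n ltnS; apply: (IH t.+1) => //; by rewrite Hj.
Qed.

Theorem lemma2p4 (R : comNzRingType) (a : int -> R) (lam mu nu : seq nat)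
    (rhos : seq (seq nat)) (T : box -> nat) (alphas : seq box) :
  is_partition lam -> diag_seq rhos ->
  nth [::] rhos 0 = mu -> last [::] rhos = nu ->
  in_TR lam rhos T alphas ->
  (\prod_(b <- boxes lam | b \notin alphas) wfactor a rhos alphas T b != 0)%R ->
  nu_bounded lam nu T.
Proof.
move=> Hlam Hd _ Hnu [HT Hsz Hall Hsort Hval] Hprod.
have Hd' := Hd; case: Hd' => Hsr Hpart Hinc.
set c := fun b => count (col_prec ^~ b) alphas.
set rp := fun b => nth [::] rhos (c b + (b \in alphas)).
have Hidx : forall b, c b + (b \in alphas) < size rhos.
  move=> b; apply: leq_ltn_trans (count_le_size alphas b) _.
  by rewrite Hsz prednK.
have Hidx0 : forall b, c b < size rhos.
  by move=> b; apply: leq_ltn_trans (Hidx b); apply: leq_addr.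
have Hfac : forall b, in_diag lam b -> b \notin alphas ->
    wfactor a rhos alphas T b != 0%R.
  move=> b Hb Hn; apply/eqP => H0; move/eqP: Hprod; apply.
  have Hin : b \in boxes lam.
    case: b Hb {Hn H0} => i j /andP[/andP[Hi Hi'] /andP[Hj Hj']].
    apply/allpairsPdep; exists i, j; split => //; rewrite mem_iota.
    - by rewrite Hi /= add1n ltnS.
    - by rewrite Hj /= add1n ltnS.
  by rewrite (big_rem _ Hin) /= Hn H0 mul0r.
have Hmain : forall j i, in_diag lam (i, j) -> j < row_len (rp (i, j)) (T (i, j)) + i.
  elim=> [|j IH] i Hb.
    by case/andP: Hb => _ /andP[].
  have [HTpos HTr HTc] := HT _ Hb.
  have Hi : 0 < i by case/andP: Hb => /andP[].
  have HQ : j.+1 <= row_len (nth [::] rhos (c (i, j.+1))) (T (i, j.+1)) + i.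
    case: j IH Hb HTpos HTr HTc => [|j] IH Hb HTpos HTr HTc.
      by rewrite addnC; apply: leq_trans Hi (leq_addr _ _).
    have Hb' : in_diag lam (i, j.+1).
      case/andP: Hb => H1 /andP[_ H].
      by rewrite /in_diag H1 /= (ltnW H).
    have IH' := IH i Hb'.
    have Htt : T (i, j.+2) <= T (i, j.+1) by have [_ H _] := HT _ Hb'; exact: H.
    apply: leq_trans IH' _; rewrite leq_add2r.
    have Hpp : is_partition (rp (i, j.+1)) by apply: Hpart; apply: Hidx.
    apply: leq_trans (@part_mono _ _ _ Hpp Htt) _.
    apply: (@rhos_mono _ _ _ _ Hd); last exact: Hidx0.
    by apply: count_mono; rewrite /col_prec /= ltnSn.
  set t := T (i, j.+1).
  case Hin: ((i, j.+1) \in alphas).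
  - set m := index (i, j.+1) alphas.
    have Hm : m < size alphas by rewrite index_mem.
    have Hnth : nth (0,0) alphas m = (i, j.+1) by rewrite nth_index.
    have Hc : c (i, j.+1) = m by rewrite /c -{1}Hnth count_sorted.
    have Hm1 : m.+1 < size rhos by move: (Hidx (i, j.+1)); rewrite Hin Hc addn1.
    have [p Hp] := Hinc m Hm1.
    have Ht : t = p.+1.
      rewrite /t -Hnth (Hval m.+1) /=; last by rewrite Hm.
      by rewrite /rrow /= Hp added_row_incr.
    rewrite /rp Hin Hc addn1 Hp; move: HQ; rewrite Hc -/t Ht /row_len /=.
    by rewrite nth_incr_nth eqxx add1n addSn.
  - have Hf := Hfac _ Hb (negbT Hin).
    rewrite /rp Hin addn0 ltn_neqAle HQ andbT.
    apply/eqP => Heq; move/eqP: Hf; apply.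
    have Hcon : content (i, j.+1) = Posz (row_len (nth [::] rhos (c (i, j.+1))) t).
      by rewrite /content /= {1}Heq PoszD addrK.
    by rewrite /wfactor /rho_of -/(c (i, j.+1)) -/t Hcon subrr.
move=> j /andP[Hj Hjr].
have Hsl : 0 < size lam.
  rewrite lt0n; apply/negP => /eqP/size0nil E.
  by move: Hjr; rewrite E /row_len /= leqNgt Hj.
have Hb : in_diag lam (1, j) by rewrite /in_diag /= Hsl Hj Hjr.
have HM := Hmain j 1 Hb; rewrite addn1 ltnS in HM.
have [HTpos _ _] := HT _ Hb.
have Hnup : is_partition nu by rewrite -Hnu -nth_last; apply: Hpart; rewrite prednK.
apply: col_len_ge => //; first by case/andP: Hnup.
rewrite Hj /=; apply: leq_trans HM _.
rewrite -Hnu -nth_last; apply: rhos_mono => //; last by rewrite prednK.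
by rewrite -ltnS prednK // Hidx.
Qed.
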